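(* For any efficient domination graph $G$, $\gamma_{qtR}(G)\le 3\rho(G)$.
   Context: All graphs are finite, simple and undirected. A set $B\subseteq V(G)$ is a packing if $N[u]\cap N[v]=\emptyset$ for all distinct $u,v\in B$; the packing number $\rho(G)$ is the maximum size of a packing. $G$ is an efficient domination graph if $\rho(G)=\gamma(G)$, where $\gamma(G)$ is the domination number. For $f:V(G)\to\{0,1,2\}$ write $V_i=\{v:f(v)=i\}$; weight $\omega(f)=|V_1|+2|V_2|$. A quasi-total Roman dominating function (QTRDF) is an $f$ such that every vertex labeled $0$ is adjacent to a vertex labeled $2$, and every vertex isolated in the subgraph induced by $V_1\cup V_2$ has label $1$; $\gamma_{qtR}(G)$ is the minimum weight of a QTRDF. *)

(* Defs.v *)
From mathcomp Require Import all_boot all_order.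
Set Implicit Arguments. Unset Strict Implicit. Unset Printing Implicit Defensive.

Definition simple_graph (T : finType) (e : rel T) : Prop :=
  symmetric e /\ irreflexive e.

Section Graph.
Variables (T : finType) (e : rel T).

Definition cnbh (v : T) : {set T} := [set u | (u == v) || e v u].

Definition dominating (D : {set T}) : bool :=
  [forall v, [exists u in D, v \in cnbh u]].

Definition packing (B : {set T}) : bool :=
  [forall u in B, forall v in B, (u != v) ==> [disjoint cnbh u & cnbh v]].

Definition gamma : nat :=
  #|[arg min_(D < setT | dominating D) #|D|]|.

Definition rho : nat :=
  #|[arg max_(B > set0 | packing B) #|B|]|.

Definition efficient_domination_graph : Prop := rho = gamma.

Definition weight (f : {ffun T -> 'I_3}) : nat := \sum_(v : T) (f v : nat).

(* QTRDF: every vertex labelled 0 has a neighbour labelled 2, and every vertex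
   isolated in the subgraph induced by V1 ∪ V2 (i.e. a vertex of V1 ∪ V2 with no
   neighbour in V1 ∪ V2) is labelled 1. *)
Definition qtrdf (f : {ffun T -> 'I_3}) : bool :=
  [forall v, ((f v : nat) == 0) ==> [exists u, e v u && ((f u : nat) == 2)]] &&
  [forall v, (((f v : nat) != 0) && ~~ [exists u, e v u && ((f u : nat) != 0)])
               ==> ((f v : nat) == 1)].

Definition one3 : 'I_3 := inord 1.
Definition fone : {ffun T -> 'I_3} := [ffun => one3].

(* quasi-total Roman domination number (fone is a QTRDF) *)
Definition gamma_qtR : nat :=
  weight [arg min_(f < fone | qtrdf f) weight f].

End Graph.

(* Main.v *)
Require Import Defs.
From mathcomp Require Import all_boot all_order.

Lemma one3E : (one3 : nat) = 1.
Proof. by rewrite /one3 inordK. Qed.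

Lemma qtrdf_fone (T : finType) (e : rel T) : qtrdf e (fone T).
Proof.
apply/andP; split; apply/forallP => v; rewrite /fone ffunE one3E //.
by apply/implyP.
Qed.

Lemma gqtR_le (T : finType) (e : rel T) f : qtrdf e f -> gamma_qtR e <= weight f.
Proof.
move=> Hf; rewrite /gamma_qtR.
by case: (arg_minnP (fun g => weight g) (qtrdf_fone T e)) => g _ /(_ f Hf).
Qed.

Theorem mainTheorem9 (T : finType) (e : rel T) :
  simple_graph e -> efficient_domination_graph e ->
  gamma_qtR e <= 3 * rho e.
Proof.
move=> [esym eirr]; rewrite /efficient_domination_graph => ->.
rewrite /gamma.
have dT : dominating e [set: T].
  apply/forallP => v; apply/existsP; exists v; by rewrite in_setT inE eqxx.
case: (arg_minnP (fun D : {set T} => #|D|) dT) => D HD _.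
pose c v := odflt v [pick u | e v u].
pose S := c @: D.
pose g (u : T) : nat := if (u \in D) && [exists w, e u w] then 2 else if u \in S then 1 else 0.
have g3 u : g u < 3 by rewrite /g; case: ifP => //; case: ifP.
pose f := [ffun u => (Ordinal (g3 u) : 'I_3)].
have fE u : (f u : nat) = g u by rewrite ffunE.
apply: (leq_trans (@gqtR_le T e f _)).
- apply/andP; split; apply/forallP => v; rewrite fE.
  + apply/implyP => /eqP g0.
    have inS w : w \in D -> ~~ [exists x, e w x] -> w \in S.
      move=> wD /existsPn Hn; have -> : w = c w.
        by rewrite /c; case: pickP => [u Hu|] //=; move: (Hn u); rewrite Hu.
      exact: imset_f.
    have vD : v \notin D.
      apply/negP => vD; move: g0; rewrite /g vD /=.
      case: ifP => // /negbT Hn; by rewrite (inS v vD Hn).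
    move/forallP: HD => /(_ v) /existsP [u /andP [uD]].
    rewrite inE => /orP [/eqP vu|euv]; first by rewrite vu uD in vD.
    apply/existsP; exists u; rewrite esym euv fE /g uD /=.
    by have -> : [exists w, e u w] by apply/existsP; exists v.
  + apply/implyP => /andP [gn0 /existsPn noN].
    move: gn0; rewrite /g; case: ifP => [/andP [vD /existsP [w evw]] _|_]; last by case: ifP.
    have ec : e v (c v) by rewrite /c; case: pickP => [u Hu|/(_ w)] //=; rewrite evw.
    have cS : c v \in S by apply: imset_f.
    move: (noN (c v)); rewrite ec fE /g cS /=; by case: ifP.
- rewrite /weight.
  apply: (@leq_trans (\sum_(v : T) (2 * (v \in D) + (v \in S)))).
    apply: leq_sum => v _; rewrite fE /g.
    case: ifP => [/andP[-> _]|_] //; case: ifP => _ //; by rewrite addn1.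
  rewrite big_split /= -big_distrr /=.
have cardE (A : {set T}) : \sum_i ((i \in A) : nat) = #|A|.
    rewrite -sum1_card [RHS]big_mkcond; apply: eq_bigr => i _; by case: (i \in A).
  rewrite !cardE mulSn addnC leq_add2r; exact: leq_imset_card.
Qed.
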